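(* Let $\nu$ be a lattice path from $(0,0)$ to $(\ell-n,n)$ with $n\ge 1$, let $f_0$ be the largest index with $b_{f_0}(\nu)=0$, let $\nu^{\#}$ be the path obtained from $\nu$ by deleting its first $f_0+1$ steps (translated to start at the origin), and for $\vec{\mathsf b}=(\mathsf b_0,\dots,\mathsf b_\ell)\in\mathrm{Vec}(\nu)$ let $\vec{\mathsf b}^{\#}=(\mathsf b_{f_0+1}-1,\mathsf b_{f_0+2}-1,\dots,\mathsf b_\ell-1)$, which lies in $\mathrm{Vec}(\nu^{\#})$. If $\vec{\mathsf b}$ is $t$-$\mathsf{Pop}$-sortable in $\mathrm{Vec}(\nu)$, then $\vec{\mathsf b}^{\#}$ is $t$-$\mathsf{Pop}$-sortable in $\mathrm{Vec}(\nu^{\#})$.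
   Context: Lattice paths use unit steps N$=(0,1)$, E$=(1,0)$. For a path $\nu$ with $\ell$ steps from $(0,0)$ to $(\ell-n,n)$, $\mathbf b(\nu)=(b_0(\nu),\dots,b_\ell(\nu))$ lists the heights ($y$-coordinates) of the successive lattice points of $\nu$, and $f_k$ ($0\le k\le n$) is the largest index with $b_{f_k}(\nu)=k$. $\mathrm{Vec}(\nu)$ is the set of integer vectors $(\mathsf b_0,\dots,\mathsf b_\ell)$ such that (1) $\mathsf b_{f_k}=k$ for all $k=0,\dots,n$; (2) $b_i(\nu)\le\mathsf b_i\le n$ for all $i$; (3) if $\mathsf b_i=k$ then $\mathsf b_j\le k$ for all $i+1\le j\le f_k$. With the componentwise order, $\mathrm{Vec}(\nu)$ is a finite lattice (isomorphic to the $\nu$-Tamari lattice $\mathrm{Tam}(\nu)$) with minimum $\hat 0$. For a finite lattice $M$, $\mathsf{Pop}_M(x)=\bigwedge(\{y: y\lessdot x\}\cup\{x\})$, and $x$ is $t$-$\mathsf{Pop}$-sortable if $\mathsf{Pop}_M^t(x)=\hat 0$. *)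

(* Defs.v *)
From mathcomp Require Import all_boot.
Set Implicit Arguments. Unset Strict Implicit. Unset Printing Implicit Defensive.

(* A lattice path nu is a seq bool: true = N step (0,1), false = E step (1,0).
   ell = size nu, n = count id nu (number of N steps). *)

Definition ell (nu : seq bool) : nat := size nu.
Definition nN (nu : seq bool) : nat := count id nu.

Definition bh (nu : seq bool) (i : nat) : nat := count id (take i nu).

Definition fk (nu : seq bool) (k : nat) : nat :=
  last 0 [seq i <- iota 0 (ell nu).+1 | bh nu i == k].

(* Vectors are seq nat of length ell+1; entry i is nth 0 v i. *)
Definition inVec (nu : seq bool) (v : seq nat) : bool :=
  [&& size v == (ell nu).+1,
      all (fun k => nth 0 v (fk nu k) == k) (iota 0 (nN nu).+1),
      all (fun i => (bh nu i <= nth 0 v i) && (nth 0 v i <= nN nu))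
          (iota 0 (ell nu).+1) &
      all (fun i => all (fun j => (i.+1 <= j) && (j <= fk nu (nth 0 v i))
                                 ==> (nth 0 v j <= nth 0 v i))
                        (iota 0 (ell nu).+1))
          (iota 0 (ell nu).+1)].

Fixpoint allseqs (m n : nat) : seq (seq nat) :=
  match m with
  | 0 => [:: [::]]
  | m'.+1 => [seq x :: s | x <- iota 0 n.+1, s <- allseqs m' n]
  end.

Definition Vec (nu : seq bool) : seq (seq nat) :=
  [seq v <- allseqs (ell nu).+1 (nN nu) | inVec nu v].

Definition vle (x y : seq nat) : bool := all2 leq x y.
Definition vlt (x y : seq nat) : bool := vle x y && (x != y).

Definition covby (nu : seq bool) (y x : seq nat) : bool :=
  [&& y \in Vec nu, vlt y x & ~~ has (fun z => vlt y z && vlt z x) (Vec nu)].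

Definition isglb (nu : seq bool) (S : seq (seq nat)) (m : seq nat) : bool :=
  [&& m \in Vec nu, all (vle m) S &
      all (fun z => all (vle z) S ==> vle z m) (Vec nu)].

Definition Pop (nu : seq bool) (x : seq nat) : seq nat :=
  let S := x :: [seq y <- Vec nu | covby nu y x] in
  head x [seq m <- Vec nu | isglb nu S m].

Definition bottom (nu : seq bool) : seq nat :=
  head [::] [seq m <- Vec nu | all (vle m) (Vec nu)].

Definition pop_sortable (nu : seq bool) (t : nat) (x : seq nat) : Prop :=
  iter t (Pop nu) x = bottom nu.

Definition nu_sharp (nu : seq bool) : seq bool := drop (fk nu 0).+1 nu.

Definition vec_sharp (nu : seq bool) (v : seq nat) : seq nat :=
  [seq x.-1 | x <- drop (fk nu 0).+1 v].

(* Main.v *)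
Require Import Defs.
From mathcomp Require Import all_boot zify.
Set Implicit Arguments. Unset Strict Implicit. Unset Printing Implicit Defensive.


Lemma vleP (x y : seq nat) : size x = size y ->
  reflect (forall i, nth 0 x i <= nth 0 y i) (vle x y).
Proof.
rewrite /vle; elim: x y => [|a x IH] [|b y] //= => [_|[Hs]].
  by apply: (iffP idP) => // _ [].
apply: (iffP andP) => [[Hab /(IH _ Hs) H] [|i] //=|H].
split; first exact: (H 0).
by apply/(IH _ Hs) => i; exact: (H i.+1).
Qed.

Lemma vle_size x y : vle x y -> size x = size y.
Proof. by rewrite /vle all2E => /andP[/eqP]. Qed.

Lemma vle_refl x : vle x x.
Proof. by apply/vleP. Qed.

Lemma vle_trans x y z : vle x y -> vle y z -> vle x z.
Proof.
move=> Hxy Hyz; have Sxy := vle_size Hxy; have Syz := vle_size Hyz.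
move/vleP: Hxy => /(_ Sxy) Hxy; move/vleP: Hyz => /(_ Syz) Hyz.
apply/vleP; first by rewrite Sxy.
by move=> i; apply: leq_trans (Hxy i) (Hyz i).
Qed.

Lemma vle_sum x y : vle x y -> sumn x <= sumn y.
Proof.
rewrite /vle; elim: x y => [|a x IH] [|b y] //= /andP[H1 H2].
by apply: leq_add => //; apply: IH.
Qed.

Lemma vle_sum_eq x y : vle x y -> sumn x = sumn y -> x = y.
Proof.
rewrite /vle; elim: x y => [|a x IH] [|b y] //= /andP[H1 H2] E.
have := vle_sum H2 => H3.
have Eab : a = b by lia.
by rewrite Eab (IH y H2) //; lia.
Qed.

Lemma vle_anti x y : vle x y -> vle y x -> x = y.
Proof.
move=> H1 H2; apply: vle_sum_eq (H1) _.
by apply/eqP; rewrite eqn_leq (vle_sum H2) (vle_sum H1).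
Qed.

Lemma vlt_sum x y : vlt x y -> sumn x < sumn y.
Proof.
case/andP=> H1 H2; rewrite ltn_neqAle vle_sum // andbT.
by apply: contra H2 => /eqP E; apply/eqP/vle_sum_eq.
Qed.

Lemma mem_allseqs m n s : (s \in allseqs m n) = (size s == m) && all (fun x => x <= n) s.
Proof.
elim: m s => [|m IH] [|a s].
- by rewrite inE.
- by rewrite inE.
- rewrite (_ : allseqs m.+1 n = [seq x :: s | x <- iota 0 n.+1, s <- allseqs m n]) //.
  by apply/allpairsP; case=> [[x y]] /= [_ _].
- rewrite (_ : allseqs m.+1 n = [seq x :: s | x <- iota 0 n.+1, s <- allseqs m n]) //.
  apply/allpairsP/idP => [[[x y]] /= [Hx Hy [-> ->]]|/andP[Hs /andP[Ha Has]]].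
    move: Hy; rewrite IH => /andP[/eqP -> ->]; move: Hx; rewrite -[0 :: _]/(iota 0 n.+1) mem_iota /= eqxx /= andbT; lia.
  exists (a, s); split; [rewrite mem_iota /=; lia | | by []].
  by rewrite /= IH -(eqSS (size s)) Hs.
Qed.


Lemma last_filter_iota (P : pred nat) m : (exists2 i, i < m & P i) ->
  let l := last 0 [seq i <- iota 0 m | P i] in
  [/\ l < m, P l & forall i, i < m -> P i -> i <= l].
Proof.
elim: m => [[i //]|m IH] Hex.
rewrite [last _ _](_ : _ = last 0 ([seq i <- iota 0 m | P i] ++ [seq i <- [:: m] | P i])); last by rewrite -filter_cat -[m.+1]addn1 iotaD.
rewrite last_cat /=.
case: ifP => Pm /=.
  split => // i Hi _; lia.
have Hex' : exists2 i, i < m & P i.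
  case: Hex => i Hi Pi; exists i => //.
  rewrite ltn_neqAle -ltnS Hi andbT; apply: contraFneq Pm => <-; exact: Pi.
have [H1 H2 H3] := IH Hex'.
split => //; first lia.
move=> i Hi Pi; apply: H3 => //.
rewrite ltn_neqAle -ltnS Hi andbT; apply: contraFneq Pm => <-; exact: Pi.
Qed.

Lemma fk_le nu k : fk nu k <= ell nu.
Proof.
rewrite /fk; have := mem_last 0 [seq i <- iota 0 (ell nu).+1 | bh nu i == k].
by rewrite inE => /orP[/eqP -> //|]; rewrite mem_filter mem_iota => /andP[_ /andP[_]]; rewrite add0n ltnS.
Qed.

Lemma bh0 nu : bh nu 0 = 0.
Proof. by rewrite /bh take0. Qed.

Lemma bhD nu i j : bh nu (i + j) = bh nu i + count id (take j (drop i nu)).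
Proof. by rewrite /bh takeD count_cat. Qed.

Lemma bh_mono nu i j : i <= j -> bh nu i <= bh nu j.
Proof. by move=> H; rewrite -(subnKC H) bhD leq_addr. Qed.

Lemma bh_succ nu i : bh nu i.+1 <= (bh nu i).+1.
Proof.
rewrite -addn1 bhD -[(bh nu i).+1]addn1 leq_add2l.
by case: (drop i nu) => [|[] ?]; rewrite /= ?take0.

Qed.

Lemma bh_ell nu i : ell nu <= i -> bh nu i = nN nu.
Proof. by move=> H; rewrite /bh take_oversize. Qed.

Lemma bh_le_n nu i : bh nu i <= nN nu.
Proof.
case: (leqP i (ell nu)) => H; last by rewrite bh_ell // ltnW.
by rewrite -(bh_ell (leqnn _)) bh_mono.
Qed.

Lemma bh_ex nu k : k <= nN nu -> exists2 i, i <= ell nu & bh nu i = k.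
Proof.
move=> Hk0.
suff: forall i, i <= ell nu -> forall k, k <= bh nu i -> exists2 j, j <= i & bh nu j = k.
  move=> H; have [j Hj Ej] := H (ell nu) (leqnn _) k ltac:(by rewrite bh_ell).
  by exists j.
elim=> [_ q|i IH Hi q Hk].
  by rewrite bh0 leqn0 => /eqP ->; exists 0; rewrite ?bh0.
case: (leqP q (bh nu i)) => Hki.
  by have [j Hj Ej] := IH (ltnW Hi) q Hki; exists j => //; lia.
exists i.+1 => //; have := bh_succ nu i; lia.
Qed.

Lemma fk_spec nu k : k <= nN nu ->
  [/\ bh nu (fk nu k) = k, fk nu k <= ell nu &
      forall i, i <= ell nu -> (bh nu i <= k) = (i <= fk nu k)].
Proof.
move=> Hk.
have Hex : exists2 i, i < (ell nu).+1 & bh nu i == k.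
  by have [i Hi Ei] := bh_ex Hk; exists i; rewrite ?ltnS ?Ei.
have [H1 /eqP H2 H3] := last_filter_iota Hex.
rewrite /fk; split => // i Hi.
apply/idP/idP => H.
  case: (leqP i (last 0 [seq i <- iota 0 (ell nu).+1 | bh nu i == k])) => // Hlt.
  have := bh_mono nu (ltnW Hlt); rewrite H2 => H'.
  have : i <= last 0 [seq i <- iota 0 (ell nu).+1 | bh nu i == k].
    by apply: H3; rewrite ?ltnS // eqn_leq H H'.
  lia.
by rewrite -[X in _ <= X]H2; apply: bh_mono.
Qed.

Lemma fk_uniq nu (Q : nat -> bool) a b : a <= ell nu -> b <= ell nu ->
  (forall i, i <= ell nu -> Q i = (i <= a)) ->
  (forall i, i <= ell nu -> Q i = (i <= b)) -> a = b.
Proof.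
move=> Ha Hb H1 H2; apply/eqP; rewrite eqn_leq.
by rewrite -H2 // H1 // leqnn -H1 // H2 // leqnn.
Qed.

Lemma inVecP nu v : reflect
  [/\ size v = (ell nu).+1,
      (forall k, k <= nN nu -> nth 0 v (fk nu k) = k),
      (forall i, i <= ell nu -> bh nu i <= nth 0 v i <= nN nu) &
      (forall i j, i <= ell nu -> j <= ell nu -> i < j -> j <= fk nu (nth 0 v i) ->
                   nth 0 v j <= nth 0 v i)]
  (inVec nu v).
Proof.
rewrite /inVec; apply: (iffP and4P) => [[/eqP H1 /allP H2 /allP H3 /allP H4]|[H1 H2 H3 H4]].
  split => //.
  - by move=> k Hk; apply/eqP/H2; rewrite mem_iota.
  - by move=> i Hi; apply/H3; rewrite mem_iota.
  - move=> i j Hi Hj Hij Hf.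
    have /allP := H4 i ltac:(by rewrite mem_iota).
    by move=> /(_ j ltac:(by rewrite mem_iota)) /implyP; apply; rewrite Hij Hf.
split; first by rewrite H1.
- by apply/allP => k; rewrite mem_iota => /andP[_ Hk]; apply/eqP/H2.
- by apply/allP => i; rewrite mem_iota => /andP[_ Hi]; apply/H3.
- apply/allP => i; rewrite mem_iota => /andP[_ Hi]; apply/allP => j.
  rewrite mem_iota => /andP[_ Hj]; apply/implyP => /andP[Hij Hf]; exact: H4.
Qed.

Lemma memVec nu v : (v \in Vec nu) = inVec nu v.
Proof.
rewrite /Vec mem_filter; case H: (inVec nu v) => //; rewrite andTb.
move/inVecP: H => [H1 _ H3 _].
rewrite mem_allseqs H1 eqxx andTb; apply/(all_nthP 0) => i Hi.
by case/andP: (H3 i ltac:(by rewrite -ltnS -H1)).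
Qed.


Definition vmin (a b : seq nat) : seq nat :=
  mkseq (fun i => minn (nth 0 a i) (nth 0 b i)) (size a).

Lemma nth_vmin a b i : size a = size b -> nth 0 (vmin a b) i = minn (nth 0 a i) (nth 0 b i).
Proof.
move=> Hs; rewrite /vmin; case: (ltnP i (size a)) => Hi; first by rewrite nth_mkseq.
by rewrite !nth_default ?size_mkseq // -Hs.
Qed.

Lemma size_vmin a b : size (vmin a b) = size a.
Proof. by rewrite size_mkseq. Qed.

Lemma vmin_Vec nu a b : a \in Vec nu -> b \in Vec nu -> vmin a b \in Vec nu.
Proof.
rewrite !memVec => /inVecP[Sa Ca Ba Ta] /inVecP[Sb Cb Bb Tb].
have Sab : size a = size b by rewrite Sa Sb.
apply/inVecP; split.
- by rewrite size_vmin.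
- by move=> k Hk; rewrite nth_vmin // Ca // Cb // minnn.
- move=> i Hi; rewrite nth_vmin //; have := Ba i Hi; have := Bb i Hi; lia.
- move=> i j Hi Hj Hij; rewrite !nth_vmin //.
  case: (leqP (nth 0 a i) (nth 0 b i)) => H.
    move=> Hf; have := Ta i j Hi Hj Hij Hf; lia.
  move=> Hf; have := Tb i j Hi Hj Hij Hf; lia.
Qed.

Lemma vle_vminl a b : size a = size b -> vle (vmin a b) a.
Proof. by move=> Hs; apply/vleP => [|i]; rewrite ?size_vmin // nth_vmin // geq_minl. Qed.

Lemma vle_vminr a b : size a = size b -> vle (vmin a b) b.
Proof. by move=> Hs; apply/vleP => [|i]; rewrite ?size_vmin // nth_vmin // geq_minr. Qed.

Lemma vle_vmin z a b : vle z a -> vle z b -> vle z (vmin a b).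
Proof.
move=> Ha Hb; have Sa := vle_size Ha; have Sb := vle_size Hb.
move/vleP: Ha => /(_ Sa) Ha; move/vleP: Hb => /(_ Sb) Hb.
apply/vleP => [|i]; first by rewrite size_vmin.
by rewrite nth_vmin -?Sa // leq_min Ha Hb.
Qed.

Lemma Vec_size nu v : v \in Vec nu -> size v = (ell nu).+1.
Proof. by rewrite memVec => /inVecP[]. Qed.

Lemma glb_ex nu x C : x \in Vec nu -> all (fun y => y \in Vec nu) C ->
  exists m, isglb nu (x :: C) m.
Proof.
move=> Hx HC; exists (foldr vmin x C).
have Hs : forall C, size (foldr vmin x C) = (ell nu).+1 \/ C <> [::] /\ size (foldr vmin x C) = size (head x C).
  by case=> [|c C'] /=; [left; rewrite (Vec_size Hx) | right; rewrite size_vmin].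
have Hsz : forall C, all (fun y => y \in Vec nu) C -> size (foldr vmin x C) = (ell nu).+1.
  move=> C'; case: (Hs C') => [//|[_ ->]]; case: C' => [|c C'] /= ; first by rewrite (Vec_size Hx).
  by case/andP => /Vec_size.
have Hin : foldr vmin x C \in Vec nu.
  elim: C HC {Hs} => [|c C IH] /= ; first by [].
  by case/andP=> Hc HC; apply: vmin_Vec => //; apply: IH.
rewrite /isglb Hin andTb; apply/andP; split.
- rewrite /=; apply/andP; split.
    elim: C HC {Hin Hs} => [|c C IH] /=; first by rewrite vle_refl.
    case/andP => Hc HC; apply: vle_trans (IH HC).
    by apply: vle_vminr; rewrite (Vec_size Hc) Hsz.
  elim: C HC {Hin Hs} => [|c C IH] //= /andP[Hc HC]; apply/andP; split.
    by apply: vle_vminl; rewrite (Vec_size Hc) Hsz.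
  have Hcs : size c = size (foldr vmin x C) by rewrite (Vec_size Hc) Hsz.
  apply/allP => y Hy; apply: vle_trans (vle_vminr Hcs) _.
  by move/allP: (IH HC); apply.
- apply/allP => z Hz; apply/implyP => /= /andP[Hzx HzC].
  elim: C HC HzC {Hin Hs} => [|c C IH] //= /andP[Hc HC] /andP[Hzc HzC].
  by apply: vle_vmin => //; apply: IH.
Qed.

Definition popS nu x := x :: [seq y <- Vec nu | covby nu y x].

Lemma PopP nu x : x \in Vec nu -> isglb nu (popS nu x) (Pop nu x).
Proof.
move=> Hx.
have [m Hm] : exists m, isglb nu (popS nu x) m.
  apply: glb_ex => //; apply/allP => y; rewrite mem_filter => /andP[_ ->] //.
have Hmem : m \in [seq m <- Vec nu | isglb nu (popS nu x) m].
  by rewrite mem_filter Hm; case/and3P: Hm.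
have Hall := filter_all (isglb nu (popS nu x)) (Vec nu).
change (Pop nu x) with (head x [seq m <- Vec nu | isglb nu (popS nu x) m]).
move: Hall Hmem; case: [seq m <- Vec nu | isglb nu (popS nu x) m] => [//|a s] /= /andP[Ha _] _.
exact: Ha.
Qed.

Lemma Pop_Vec nu x : x \in Vec nu -> Pop nu x \in Vec nu.
Proof. by move/PopP/and3P => []. Qed.

Lemma mem_popS nu x y : (y \in popS nu x) = (y == x) || covby nu y x.
Proof.
rewrite /popS inE mem_filter; congr (_ || _).
by case H: (covby nu y x) => //=; case/and3P: H.
Qed.

Lemma chain nu x y : x \in Vec nu -> y \in Vec nu -> vlt y x ->
  exists2 y', covby nu y' x & vle y y'.
Proof.
move=> Hx; move Hd : (sumn x - sumn y) => d.
elim: d {-2}d (leqnn d) y Hd => [|d IH] d' Hd' y Hd Hy Hyx.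
  have := vlt_sum Hyx; lia.
case Hc: (has (fun z => vlt y z && vlt z x) (Vec nu)).
  case/hasP: Hc => z Hz /andP[Hyz Hzx].
  have := vlt_sum Hyz => Hs.
  have [y' H1 H2] := IH (sumn x - sumn z) ltac:(lia) z erefl Hz Hzx.
  by exists y' => //; apply: vle_trans H2; case/andP: Hyz.
exists y; last exact: vle_refl.
by rewrite /covby Hy Hyx Hc.
Qed.

Definition hv nu := mkseq (bh nu) (ell nu).+1.

Lemma hv_Vec nu : hv nu \in Vec nu.
Proof.
rewrite memVec; apply/inVecP; split.
- by rewrite size_mkseq.
- move=> k Hk; have [H1 H2 _] := fk_spec Hk; by rewrite nth_mkseq.
- by move=> i Hi; rewrite nth_mkseq // leqnn bh_le_n.
- move=> i j Hi Hj Hij; rewrite !nth_mkseq //.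
  have [_ _ H3] := fk_spec (bh_le_n nu i).
  by rewrite -H3.
Qed.

Lemma hv_le nu v : v \in Vec nu -> vle (hv nu) v.
Proof.
move=> Hv; have Hs := Vec_size Hv; move: Hv; rewrite memVec => /inVecP[_ _ H _].
apply/vleP; first by rewrite size_mkseq.
move=> i; case: (leqP i (ell nu)) => Hi.
  by rewrite nth_mkseq //; case/andP: (H i Hi).
by rewrite nth_default // size_mkseq.
Qed.

Lemma bottomE nu : bottom nu = hv nu.
Proof.
have Hmem : hv nu \in [seq m <- Vec nu | all (vle m) (Vec nu)].
  by rewrite mem_filter hv_Vec andbT; apply/allP => v; apply: hv_le.
have Hall := filter_all (fun m => all (vle m) (Vec nu)) (Vec nu).
have Hsub : forall m, m \in [seq m <- Vec nu | all (vle m) (Vec nu)] -> m \in Vec nu.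
  by move=> m; rewrite mem_filter => /andP[].
rewrite /bottom; move: Hall Hmem Hsub.
case: [seq m <- Vec nu | all (vle m) (Vec nu)] => [//|a s] /= /andP[Ha _] _ Hsub.
apply: vle_anti; first by move/allP: Ha; apply; apply: hv_Vec.
by apply: hv_le; apply: Hsub; rewrite inE eqxx.
Qed.


Section Sharp.
Variable nu : seq bool.
Hypothesis Hn : 1 <= nN nu.
Local Notation F := (fk nu 0).
Local Notation nus := (nu_sharp nu).

Lemma F_lt : F < ell nu.
Proof.
have [_ H2 H3] := fk_spec (leq0n (nN nu)).
have := H3 (ell nu) (leqnn _); rewrite bh_ell // => E.
rewrite ltnNge -E; lia.
Qed.

Lemma bh_lo i : i <= F -> bh nu i = 0.
Proof.
move=> Hi; have [_ H2 H3] := fk_spec (leq0n (nN nu)).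
by apply/eqP; rewrite -leqn0 H3 //; apply: leq_trans Hi H2.
Qed.

Lemma bh_F1 : bh nu F.+1 = 1.
Proof.
have [_ H2 H3] := fk_spec (leq0n (nN nu)).
have := H3 F.+1 F_lt; rewrite ltnn => /negbT; rewrite -ltnNge => H.
have := bh_succ nu F; rewrite (bh_lo (leqnn F)); lia.
Qed.

Lemma bh_hi j : bh nu (F.+1 + j) = (bh nus j).+1.
Proof. by rewrite bhD bh_F1. Qed.

Lemma ell_sharp : ell nus = ell nu - F.+1.
Proof. by rewrite /ell /nu_sharp size_drop. Qed.

Lemma nN_sharp : nN nu = (nN nus).+1.
Proof.
have := bh_hi (ell nus); rewrite ell_sharp subnKC ?F_lt // bh_ell // bh_ell //.
by rewrite ell_sharp.
Qed.

Lemma fk_gt k : 0 < k -> k <= nN nu -> F < fk nu k.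
Proof.
move=> Hk0 Hk; have [H1 _ _] := fk_spec Hk.
rewrite ltnNge; apply/negP => H; move: H1; rewrite bh_lo //; lia.
Qed.

Lemma fk_sharp k : k <= nN nus -> fk nu k.+1 = F.+1 + fk nus k.
Proof.
move=> Hk; have Hk' : k.+1 <= nN nu by rewrite nN_sharp.
have [G1 G2 G3] := fk_spec Hk'.
have HG := fk_gt (ltn0Sn k) Hk'.
have [S1 S2 S3] := fk_spec Hk.
suff -> : fk nus k = fk nu k.+1 - F.+1 by rewrite subnKC.
apply: (@fk_uniq nus (fun i => bh nus i <= k)) => //.
- by rewrite ell_sharp; lia.
- move=> i Hi; rewrite -ltnS -bh_hi G3; first lia.
  by move: Hi; rewrite ell_sharp; have := F_lt; lia.
Qed.

Lemma nth_sharp x j : nth 0 (vec_sharp nu x) j = (nth 0 x (F.+1 + j)).-1.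
Proof.
rewrite /vec_sharp; case: (ltnP j (size (drop F.+1 x))) => H.
  by rewrite (nth_map 0) // nth_drop.
rewrite nth_default ?size_map // -(nth_drop F.+1 0 x j) nth_default //.
Qed.

Lemma size_sharp x : size (vec_sharp nu x) = size x - F.+1.
Proof. by rewrite size_map size_drop. Qed.

Lemma Vec_pos x i : x \in Vec nu -> F < i -> i <= ell nu -> 0 < nth 0 x i.
Proof.
rewrite memVec => /inVecP[_ _ H3 _] Hi Hi'.
have := H3 i Hi'; rewrite -(subnKC Hi) bh_hi; lia.
Qed.

Lemma sharp_Vec x : x \in Vec nu -> vec_sharp nu x \in Vec nus.
Proof.
move=> Hx; have Hpos := Vec_pos Hx.
move: Hx; rewrite !memVec => /inVecP[H1 H2 H3 H4].
have HF := F_lt; have Hns := nN_sharp.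
apply/inVecP; split.
- by rewrite size_sharp H1 ell_sharp; lia.
- move=> k Hk; rewrite nth_sharp -fk_sharp // H2 //; lia.
- move=> j Hj; rewrite nth_sharp; move: Hj; rewrite ell_sharp => Hj.
  have := H3 (F.+1 + j) ltac:(lia); rewrite bh_hi; lia.
- move=> i j; rewrite ell_sharp => Hi Hj Hij; rewrite !nth_sharp.
  have Hp := Hpos (F.+1 + i) ltac:(lia) ltac:(lia).
  have Hb := H3 (F.+1 + i) ltac:(lia).
  have Hk : (nth 0 x (F.+1 + i)).-1 <= nN nus by move: Hb; rewrite nN_sharp; lia.
  move=> Hf; have := fk_sharp Hk; rewrite prednK // => E.
  have := H4 (F.+1 + i) (F.+1 + j) ltac:(lia) ltac:(lia) ltac:(lia); rewrite E.
  move=> H; have := H ltac:(lia); lia.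
Qed.

Definition liftv (x z : seq nat) := take F.+1 x ++ map S z.

Lemma size_lift x z : F < size x -> size (liftv x z) = F.+1 + size z.
Proof. by move=> H; rewrite size_cat (size_takel H) size_map. Qed.

Lemma nth_lift_lo x z i : F < size x -> i <= F -> nth 0 (liftv x z) i = nth 0 x i.
Proof.
move=> H Hi; rewrite nth_cat (size_takel H) ltnS Hi nth_take //.
Qed.

Lemma nth_lift_hi x z j : F < size x -> j < size z ->
  nth 0 (liftv x z) (F.+1 + j) = (nth 0 z j).+1.
Proof.
move=> H Hj; rewrite nth_cat (size_takel H) ltnNge leq_addr /= addKn.
by rewrite (nth_map 0).
Qed.

Lemma sharp_lift x z : F < size x -> vec_sharp nu (liftv x z) = z.
Proof.
move=> H; rewrite /vec_sharp /lift drop_size_cat ?(size_takel H) //.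
by rewrite -map_comp map_id.
Qed.

Lemma lift_sharp x : x \in Vec nu -> liftv x (vec_sharp nu x) = x.
Proof.
move=> Hx; have Hs := Vec_size Hx; have HF := F_lt.
rewrite /liftv /vec_sharp -map_comp map_id_in ?cat_take_drop // => a.
move=> /(nthP 0) [i]; rewrite size_drop => Hi <- /=.
rewrite nth_drop prednK //; apply: (Vec_pos Hx); lia.
Qed.

Lemma lift_Vec x z : x \in Vec nu -> z \in Vec nus -> vle z (vec_sharp nu x) ->
  liftv x z \in Vec nu.
Proof.
move=> Hx Hz Hle; have Hpos := Vec_pos Hx.
have Hsx := Vec_size Hx; have Hsz := Vec_size Hz.
have HF := F_lt; have Hns := nN_sharp.
move: Hsz; rewrite ell_sharp => Hsz.
have Hzl : forall j, nth 0 z j <= (nth 0 x (F.+1 + j)).-1.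
  move=> j; rewrite -nth_sharp; move/vleP: Hle; apply.
  by rewrite size_sharp Hsz Hsx; lia.
have HFx : F < size x by rewrite Hsx; lia.
have Hzl' : forall i, F < i -> nth 0 z (i - F.+1) <= (nth 0 x i).-1.
  by move=> i Hi; have := Hzl (i - F.+1); rewrite subnKC.
move: Hx Hz; rewrite !memVec => /inVecP[H1 H2 H3 H4] /inVecP[Z1 Z2 Z3 Z4].
move: Z1 Z3 Z4; rewrite ell_sharp => Z1 Z3 Z4.
apply/inVecP; split.
- by rewrite size_lift // Hsz; lia.
- case=> [_|k Hk]; first by rewrite nth_lift_lo // H2.
  have Hk' : k <= nN nus by lia.
  rewrite fk_sharp // (nth_lift_hi (x:=x) HFx) ?Z2 //.
  have := fk_le nus k; rewrite ell_sharp; lia.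
- move=> i Hi; case: (leqP i F) => HiF; first by rewrite nth_lift_lo // H3.
  rewrite -(subnKC HiF) (nth_lift_hi (x:=x) HFx) ?bh_hi; last by rewrite Hsz; lia.
  have := Z3 (i - F.+1) ltac:(lia); lia.
- move=> i j Hi Hj Hij.
  case: (leqP j F) => HjF.
    rewrite !nth_lift_lo //; [exact: H4 | lia].
  case: (leqP i F) => HiF.
    rewrite (nth_lift_lo _ HFx HiF) => Hf.
    rewrite -(subnKC HjF) (nth_lift_hi (x:=x) HFx); last by rewrite Hsz; lia.
    have := Hzl (j - F.+1); have := H4 i j Hi Hj Hij Hf.
    have := Hzl' j HjF; have := H4 i j Hi Hj Hij Hf.
    have := Hpos j HjF Hj; lia.
  rewrite -(subnKC HiF) -(subnKC HjF) !(nth_lift_hi (x:=x) HFx); try (rewrite Hsz; lia).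
  have Hb := Z3 (i - F.+1) ltac:(lia).
  rewrite fk_sharp; last by lia.
  move=> Hf; have : j - F.+1 <= fk nus (nth 0 z (i - F.+1)) by lia.
  move/(Z4 (i - F.+1) (j - F.+1) ltac:(lia) ltac:(lia) ltac:(lia)); lia.
Qed.

Lemma sharp_mono a b : vle a b -> vle (vec_sharp nu a) (vec_sharp nu b).
Proof.
move=> H; have Hs := vle_size H; move/vleP: H => /(_ Hs) H.
apply/vleP => [|j]; first by rewrite !size_sharp Hs.
rewrite !nth_sharp; have := H (F.+1 + j); lia.
Qed.

Lemma lift_le a y z : y \in Vec nu -> size a = size y ->
  (forall i, i <= F -> nth 0 a i <= nth 0 y i) ->
  size z = size (vec_sharp nu y) -> vle z (vec_sharp nu y) -> vle (liftv a z) y.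
Proof.
move=> Hy Ha Hpre Hz Hle; have Hsy := Vec_size Hy; have HF := F_lt.
have Hpos := Vec_pos Hy.
move: Hz; rewrite size_sharp Hsy => Hz.
have HFa : F < size a by rewrite Ha Hsy; lia.
apply/vleP => [|i]; first by rewrite size_lift // Hz Hsy; lia.
case: (leqP i F) => HiF; first by rewrite nth_lift_lo // Hpre.
case: (leqP i (ell nu)) => Hi; last first.
  by rewrite !nth_default // ?size_lift ?Hz ?Hsy //; lia.
have [j Ej] : exists j, i = F.+1 + j by exists (i - F.+1); rewrite subnKC.
subst i.
rewrite (nth_lift_hi (x:=a) HFa); last by rewrite Hz; lia.
move/vleP: Hle => /(_ ltac:(by rewrite size_sharp Hsy Hz)) /(_ j).
rewrite nth_sharp; have := Hpos (F.+1 + j) HiF Hi; lia.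
Qed.

Lemma lift_ge a y z : y \in Vec nu -> size a = size y ->
  (forall i, i <= F -> nth 0 y i <= nth 0 a i) ->
  size z = size (vec_sharp nu y) -> vle (vec_sharp nu y) z -> vle y (liftv a z).
Proof.
move=> Hy Ha Hpre Hz Hle; have Hsy := Vec_size Hy; have HF := F_lt.
have Hpos := Vec_pos Hy.
move: Hz; rewrite size_sharp Hsy => Hz.
have HFa : F < size a by rewrite Ha Hsy; lia.
apply/vleP => [|i]; first by rewrite size_lift // Hz Hsy; lia.
case: (leqP i F) => HiF; first by rewrite nth_lift_lo // Hpre.
case: (leqP i (ell nu)) => Hi; last first.
  by rewrite !nth_default // ?size_lift ?Hz ?Hsy //; lia.
have [j Ej] : exists j, i = F.+1 + j by exists (i - F.+1); rewrite subnKC.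
subst i.
rewrite (nth_lift_hi (x:=a) HFa); last by rewrite Hz; lia.
move/vleP: Hle => /(_ ltac:(by rewrite size_sharp Hsy Hz)) /(_ j).
rewrite nth_sharp; have := Hpos (F.+1 + j) HiF Hi; lia.
Qed.
End Sharp.


Section Main.
Variable nu : seq bool.
Hypothesis Hn : 1 <= nN nu.
Local Notation F := (fk nu 0).
Local Notation nus := (nu_sharp nu).
Local Notation pi := (vec_sharp nu).

Lemma FsizeV y : y \in Vec nu -> F < size y.
Proof. by move=> Hy; rewrite (Vec_size Hy); have := F_lt Hn; lia. Qed.

Lemma size_sharpV y : y \in Vec nu -> size (pi y) = (ell nus).+1.
Proof. by move=> Hy; rewrite size_sharp (Vec_size Hy) ell_sharp; have := F_lt Hn; lia. Qed.

Lemma vleV_pre a b i : vle a b -> nth 0 a i <= nth 0 b i.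
Proof. by move=> H; move/vleP: H (vle_size H) => H /H; apply. Qed.

Lemma cov_map x y : x \in Vec nu -> covby nu y x -> pi y = pi x \/ covby nus (pi y) (pi x).
Proof.
move=> Hx /and3P[Hy /andP[Hyx Hneq] Hnh].
case: (eqVneq (pi y) (pi x)) => E; [by left | right].
have Hys := sharp_Vec Hn Hy; have Hxs := sharp_Vec Hn Hx.
rewrite /covby Hys /vlt (sharp_mono Hn Hyx) E /=.
apply/hasP => [[u Hu /andP[/andP[H1 H1'] /andP[H2 H2']]]].
have Hw := lift_Vec Hn Hx Hu H2.
move/hasP: Hnh; apply; exists (liftv nu x u) => //.
have Hsu : size u = size (pi x) by rewrite (Vec_size Hu) (size_sharpV Hx).
apply/andP; split; apply/andP; split.
- apply: lift_ge => //.
  + by rewrite (Vec_size Hx) (Vec_size Hy).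
  + by move=> i Hi; rewrite (vleV_pre _ Hyx).
  + by rewrite Hsu !size_sharpV.
- apply: contra H1' => /eqP ->; by rewrite sharp_lift ?FsizeV.
- apply: lift_le => //; by move=> i Hi.
- apply: contra H2' => /eqP E'; by rewrite -E' sharp_lift ?FsizeV.
Qed.

Lemma cov_lift x z : x \in Vec nu -> covby nus z (pi x) ->
  exists2 y, covby nu y x & pi y = z.
Proof.
move=> Hx /and3P[Hz /andP[Hzx Hneq] Hnh].
have Hy := lift_Vec Hn Hx Hz Hzx.
have HFx := FsizeV Hx.
have Hsz : size z = size (pi x) by rewrite (Vec_size Hz) (size_sharpV Hx).
have Hyx : vlt (liftv nu x z) x.
  apply/andP; split; first by apply: lift_le => //; move=> i Hi.
  by apply: contra Hneq => /eqP E; rewrite -{1}E sharp_lift.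
have [y' Hc Hyy] := chain Hx Hy Hyx.
exists y' => //.
case/and3P: Hc => Hy' /andP[Hy'x Hy'n] _.
have H1 : vle z (pi y') by rewrite -{1}(sharp_lift z HFx); apply: (sharp_mono Hn).
have H2 : vle (pi y') (pi x) by apply: (sharp_mono Hn).
case: (eqVneq (pi y') z) => // E1.
case: (eqVneq (pi y') (pi x)) => E2.
  exfalso; move/negP: Hy'n; apply; apply/eqP/vle_anti => //.
  rewrite -{1}(lift_sharp Hn Hx) -E2.
  apply: lift_le => //.
  - by rewrite (Vec_size Hx) (Vec_size Hy').
  - move=> i Hi; rewrite -(nth_lift_lo z HFx Hi); exact: vleV_pre Hyy.
  - exact: vle_refl.
exfalso; move/hasP: Hnh; apply; exists (pi y'); first exact: sharp_Vec.
by rewrite /vlt H1 H2 E2 eq_sym E1.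
Qed.

Lemma sharp_vmin a b : size a = size b -> pi (vmin a b) = vmin (pi a) (pi b).
Proof.
move=> Hs; apply: (eq_from_nth (x0 := 0)); first by rewrite size_vmin !size_sharp size_vmin.
move=> i _; rewrite nth_vmin ?size_sharp ?Hs // !nth_sharp nth_vmin //; lia.
Qed.

Lemma vminxx z : vmin z z = z.
Proof.
apply: (eq_from_nth (x0 := 0)); first by rewrite size_vmin.
by move=> i _; rewrite nth_vmin // minnn.
Qed.

Lemma lift_meet x (L : seq (seq nat)) z : x \in Vec nu -> z \in Vec nus -> vle z (pi x) ->
  (forall y, y \in L -> y \in Vec nu /\ vle z (pi y)) ->
  exists w, [/\ w \in Vec nu, pi w = z & forall y, y \in L -> vle w y].
Proof.
move=> Hx Hz Hzx; elim: L => [|y L IH] HL.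
  by exists (liftv nu x z); split => //; [apply: lift_Vec | rewrite sharp_lift ?FsizeV].
have [Hy Hzy] := HL y (mem_head _ _).
have [w [Hw Ew Hwle]] := IH (fun y' Hy' => HL y' ltac:(by rewrite inE Hy' orbT)).
have Hly := lift_Vec Hn Hy Hz Hzy.
have Hszy : size z = size (pi y) by rewrite (Vec_size Hz) (size_sharpV Hy).
have Hlyy : vle (liftv nu y z) y by apply: lift_le => // i _.
have Hsw : size (liftv nu y z) = size w by rewrite (Vec_size Hly) (Vec_size Hw).
exists (vmin (liftv nu y z) w); split.
- exact: vmin_Vec.
- by rewrite sharp_vmin // Ew sharp_lift ?FsizeV // vminxx.
- move=> y'; rewrite inE => /orP[/eqP ->|Hy'].
    exact: vle_trans (vle_vminl Hsw) Hlyy.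
  exact: vle_trans (vle_vminr Hsw) (Hwle _ Hy').
Qed.

Lemma Pop_sharp x : x \in Vec nu -> pi (Pop nu x) = Pop nus (pi x).
Proof.
move=> Hx; have Hxs := sharp_Vec Hn Hx.
have /and3P[Hm /allP Hmle /allP Hmmax] := PopP Hx.
have /and3P[Hm' /allP Hm'le /allP Hm'max] := PopP Hxs.
set m := Pop nu x in Hm Hmle Hmmax *; set m' := Pop nus (pi x) in Hm' Hm'le Hm'max *.
have Hms := sharp_Vec Hn Hm.
have Hi : vle (pi m) m'.
  move: (Hm'max _ Hms) => /implyP; apply; apply/allP => z; rewrite mem_popS => /orP[/eqP ->|Hc].
    by apply: (sharp_mono Hn); apply: Hmle; rewrite mem_popS eqxx.
  have [y' Hc' <-] := cov_lift Hx Hc.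
  by apply: (sharp_mono Hn); apply: Hmle; rewrite mem_popS Hc' orbT.
have Hall : forall y, y \in popS nu x -> y \in Vec nu /\ vle m' (pi y).
  move=> y Hy; have Hyv : y \in Vec nu.
    move: Hy; rewrite mem_popS => /orP[/eqP -> //|]; by case/and3P.
  split => //.
  move: Hy; rewrite mem_popS => /orP[/eqP ->|Hc].
    by apply: Hm'le; rewrite mem_popS eqxx.
  case: (cov_map Hx Hc) => [->|Hc'].
    by apply: Hm'le; rewrite mem_popS eqxx.
  by apply: Hm'le; rewrite mem_popS Hc' orbT.
have [w [Hw Ew Hwle]] := lift_meet Hx Hm' (proj2 (Hall x (mem_head _ _))) Hall.
suff Hii : vle m' (pi m) by apply: vle_anti.
rewrite -Ew; apply: (sharp_mono Hn).
by move: (Hmmax _ Hw) => /implyP; apply; apply/allP.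
Qed.

Lemma sharp_hv : pi (hv nu) = hv nus.
Proof.
have HF := F_lt Hn.
apply: (eq_from_nth (x0 := 0)).
  by rewrite size_sharp !size_mkseq ell_sharp; lia.
move=> i; rewrite size_sharp size_mkseq => Hi.
rewrite nth_sharp !nth_mkseq ?bh_hi // ?ell_sharp; lia.
Qed.

End Main.

Theorem corollary3p11 (nu : seq bool) (t : nat) (v : seq nat) :
  1 <= nN nu ->
  v \in Vec nu ->
  pop_sortable nu t v ->
  pop_sortable (nu_sharp nu) t (vec_sharp nu v).
Proof.
move=> Hn Hv; rewrite /pop_sortable !bottomE => H.
have : vec_sharp nu (iter t (Pop nu) v) = iter t (Pop (nu_sharp nu)) (vec_sharp nu v)
       /\ iter t (Pop nu) v \in Vec nu.
  elim: t {H} => [|t [IH1 IH2]] //=.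
  by rewrite Pop_sharp // IH1 Pop_Vec.
by case=> <- _; rewrite H sharp_hv.
Qed.
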